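(* Let $M,M'\in S_2^+$, let $(e,f)$ be an $M$-reduced basis and $(e',f')$ an $M'$-reduced basis of $\mathbb Z^2$. Let $\tau\ge1$ satisfy $\tau^{-2}M\le M'\le\tau^2M$ in the sense of symmetric matrices. Assume either (i) $2\mu(M)<\lambda_1(M)^2$ and $\tau=1$; or (ii) $4\mu(M)\le\lambda_1(M)^2$ and $\tau^4\le1+\tfrac13\kappa(M)^{-2}$. Then $\{e',f'\}\subset\{e,f,-e,-f\}$.
   Context: $\|e\|_M:=\sqrt{\langle e,Me\rangle}$, and $\kappa(M):=\sqrt{\|M\|\,\|M^{-1}\|}$ (operator norms). An $M$-reduced basis of $\mathbb Z^2$ is a basis $(e_1,e_2)$ (pair in $\mathbb Z^2$ with determinant $\pm1$) such that $\|e_1\|_M=\min\{\|e\|_M:e\in\mathbb Z^2\setminus\{0\}\}$ and $\|e_2\|_M=\min\{\|e\|_M:e\in\mathbb Z^2\setminus e_1\mathbb Z\}$. The Minkowski minima are $\lambda_1(M):=\|e_1\|_M$ and $\lambda_2(M):=\|e_2\|_M$; they are independent of the choice. Also $\mu(M):=|\langle e_1,Me_2\rangle|=\sqrt{\lambda_1(M)^2\lambda_2(M)^2-\det M}$, which is likewise independent of the choice. *)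

(* Defs.v *)
From Stdlib Require Import Reals ZArith ClassicalEpsilon.
Open Scope R_scope.

Record mat2 := Mat2 { a11 : R; a12 : R; a21 : R; a22 : R }.

Definition mulv (A : mat2) (v : R * R) : R * R :=
  (a11 A * fst v + a12 A * snd v, a21 A * fst v + a22 A * snd v).
Definition dot (u v : R * R) : R := fst u * fst v + snd u * snd v.
Definition enorm (v : R * R) : R := sqrt (dot v v).

Definition is_sym (A : mat2) : Prop := a12 A = a21 A.
Definition pos_def (A : mat2) : Prop :=
  forall v : R * R, v <> (0, 0) -> 0 < dot v (mulv A v).
Definition S2plus (A : mat2) : Prop := is_sym A /\ pos_def A.

Definition det2 (A : mat2) : R := a11 A * a22 A - a12 A * a21 A.
Definition inv2 (A : mat2) : mat2 :=
  Mat2 (a22 A / det2 A) (- a12 A / det2 A) (- a21 A / det2 A) (a11 A / det2 A).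
Definition scal2 (c : R) (A : mat2) : mat2 :=
  Mat2 (c * a11 A) (c * a12 A) (c * a21 A) (c * a22 A).

Definition loewner_le (A B : mat2) : Prop :=
  forall v : R * R, dot v (mulv A v) <= dot v (mulv B v).

Definition opnorm_set (A : mat2) (r : R) : Prop :=
  exists v : R * R, v <> (0, 0) /\ r = enorm (mulv A v) / enorm v.
Definition opnorm (A : mat2) : R :=
  epsilon (inhabits 0) (fun r => is_lub (opnorm_set A) r).
Definition kappa (M : mat2) : R := sqrt (opnorm M * opnorm (inv2 M)).

Definition zv (e : Z * Z) : R * R := (IZR (fst e), IZR (snd e)).
Definition Mnorm (M : mat2) (e : Z * Z) : R := sqrt (dot (zv e) (mulv M (zv e))).
Definition Mdot (M : mat2) (e f : Z * Z) : R := dot (zv e) (mulv M (zv f)).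

Definition zdet (e f : Z * Z) : Z := (fst e * snd f - snd e * fst f)%Z.
Definition in_line (e x : Z * Z) : Prop :=
  exists k : Z, x = ((k * fst e)%Z, (k * snd e)%Z).
Definition zneg (e : Z * Z) : Z * Z := ((- fst e)%Z, (- snd e)%Z).

Definition reduced_basis (M : mat2) (e1 e2 : Z * Z) : Prop :=
  (zdet e1 e2 = 1%Z \/ zdet e1 e2 = (-1)%Z) /\
  (forall x : Z * Z, x <> (0%Z, 0%Z) -> Mnorm M e1 <= Mnorm M x) /\
  (forall x : Z * Z, ~ in_line e1 x -> Mnorm M e2 <= Mnorm M x).

(* Minkowski minimum lambda_1(M) and mu(M), computed from an M-reduced basis
   (e1,e2); these are independent of the choice of reduced basis. *)
Definition lambda1_of (M : mat2) (e1 e2 : Z * Z) : R := Mnorm M e1.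
Definition mu_of (M : mat2) (e1 e2 : Z * Z) : R := Rabs (Mdot M e1 e2).

(* Main.v *)
Require Import Defs.
From Stdlib Require Import Reals ZArith ClassicalEpsilon Lra Lia Psatz.
Open Scope R_scope.

Definition Q (A : mat2) (v : R*R) := dot v (mulv A v).

Lemma sqrt_div_sq X Y : 0 <= X -> 0 < Y -> (sqrt X / sqrt Y)^2 = X / Y.
Proof. intros. unfold Rdiv. rewrite Rpow_mult_distr, pow_inv, !pow2_sqrt; lra. Qed.

Lemma opnorm_bound A : bound (opnorm_set A).
Proof.
  set (S := a11 A ^2 + a12 A ^2 + a21 A ^2 + a22 A ^2).
  exists (1 + S). intros r [v [Hv ->]]. destruct v as [x y].
  assert (HY : 0 < dot (x,y) (x,y)).
  { unfold dot; simpl. destruct (Req_dec x 0); destruct (Req_dec y 0); subst.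
    - exfalso; apply Hv; reflexivity.
    - nra. - nra. - nra. }
  assert (HX : 0 <= dot (mulv A (x,y)) (mulv A (x,y))).
  { unfold dot, mulv; simpl; apply Rplus_le_le_0_compat; apply Rle_0_sqr. }
  assert (HXY : dot (mulv A (x,y)) (mulv A (x,y)) <= S * dot (x,y) (x,y)).
  { unfold dot, mulv, S; simpl.
    pose proof (pow2_ge_0 (a11 A * y - a12 A * x)); pose proof (pow2_ge_0 (a21 A * y - a22 A * x)); nra. }
  unfold enorm.
  set (r := sqrt _ / sqrt _).
  assert (Hr0 : 0 <= r).
  { unfold r. apply Rmult_le_pos. apply sqrt_pos. left; apply Rinv_0_lt_compat, sqrt_lt_R0; lra. }
  assert (Hr2 : r^2 <= S).
  { unfold r; rewrite sqrt_div_sq by lra. apply Rmult_le_reg_r with (dot (x,y) (x,y)); [lra|].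
    field_simplify; lra. }
  assert (0 <= S) by (unfold S; nra). nra.
Qed.

Lemma opnorm_lub A : is_lub (opnorm_set A) (opnorm A).
Proof.
  unfold opnorm. apply epsilon_spec.
  destruct (completeness (opnorm_set A) (opnorm_bound A)) as [m Hm].
  - exists (enorm (mulv A (1,0)) / enorm (1,0)). exists (1,0). split; [|reflexivity].
    intro H; inversion H; lra.
  - exists m; exact Hm.
Qed.

Lemma opnorm_ge A v : v <> (0,0) -> Q A v / dot v v <= opnorm A.
Proof.
  intros Hv. destruct (opnorm_lub A) as [Hub _].
  eapply Rle_trans; [|apply Hub; exists v; split; [exact Hv|reflexivity]].
  destruct v as [x y].
  assert (HY : 0 < dot (x,y) (x,y)).
  { unfold dot; simpl. destruct (Req_dec x 0); destruct (Req_dec y 0); subst.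
    - exfalso; apply Hv; reflexivity.
    - nra. - nra. - nra. }
  set (X := dot (mulv A (x,y)) (mulv A (x,y))).
  assert (HX : 0 <= X) by (unfold X, dot, mulv; simpl; apply Rplus_le_le_0_compat; apply Rle_0_sqr).
  assert (HL : (Q A (x,y))^2 <= X * dot (x,y) (x,y)).
  { unfold X, Q, dot, mulv; simpl.
    pose proof (pow2_ge_0 ((a11 A * x + a12 A * y) * y - (a21 A * x + a22 A * y) * x)); nra. }
  assert (Hs : Q A (x,y) <= sqrt X * sqrt (dot (x,y) (x,y))).
  { rewrite <- sqrt_mult_alt by lra. eapply Rle_trans; [apply Rle_abs|].
    rewrite <- sqrt_Rsqr_abs. apply sqrt_le_1_alt. unfold Rsqr; lra. }
  unfold enorm. fold X.
  assert (Hsq := sqrt_sqrt (dot (x,y) (x,y)) ltac:(lra)).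
  assert (Hp := sqrt_lt_R0 (dot (x,y) (x,y)) HY).
  set (s := sqrt (dot (x, y) (x, y))) in *.
  rewrite <- Hsq. apply Rmult_le_reg_r with (s*s); [nra|].
  field_simplify; try lra.
Qed.


Lemma Q_nonneg M v : pos_def M -> 0 <= Q M v.
Proof.
  intros H. destruct v as [x y]. destruct (Req_dec x 0); destruct (Req_dec y 0); subst.
  - unfold Q, dot, mulv; simpl; lra.
  - left; apply H; intro E; inversion E; lra.
  - left; apply H; intro E; inversion E; lra.
  - left; apply H; intro E; inversion E; lra.
Qed.

Lemma det_pos M : S2plus M -> 0 < det2 M.
Proof.
  intros [Hs Hp]. unfold is_sym in Hs.
  assert (H1 : 0 < Q M (1,0)) by (apply Hp; intro E; inversion E; lra).
  unfold Q, dot, mulv in H1; simpl in H1.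
  assert (H2 : 0 < Q M (- a12 M, a11 M)) by (apply Hp; intro E; inversion E; lra).
  unfold Q, dot, mulv in H2; simpl in H2. unfold det2. rewrite <- Hs in *. nra.
Qed.

Lemma Q_inv M x y : is_sym M -> det2 M <> 0 ->
  Q (inv2 M) (y, - x) = Q M (x,y) / det2 M.
Proof. intros Hs Hd. unfold Q, dot, mulv, inv2, is_sym in *; simpl. rewrite Hs. field. auto. Qed.

Lemma nz_dot v : v <> (0,0) -> 0 < dot v v.
Proof.
  destruct v as [x y]; intros Hv. unfold dot; simpl.
  destruct (Req_dec x 0); destruct (Req_dec y 0); subst.
  - exfalso; apply Hv; reflexivity.
  - nra. - nra. - nra.
Qed.

Lemma K_ge M v x y : S2plus M -> v <> (0,0) -> (x,y) <> (0,0) ->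
  (Q M v / dot v v) * (Q M (x,y) / (det2 M * dot (x,y) (x,y)))
   <= opnorm M * opnorm (inv2 M).
Proof.
  intros HM Hv Hu. pose proof (det_pos M HM) as Hd. destruct HM as [Hs Hp].
  pose proof (nz_dot _ Hv). pose proof (nz_dot _ Hu).
  pose proof (Q_nonneg M v Hp). pose proof (Q_nonneg M (x,y) Hp).
  apply Rmult_le_compat.
  - apply Rmult_le_pos; [lra|]. left; apply Rinv_0_lt_compat; lra.
  - apply Rmult_le_pos; [lra|]. left; apply Rinv_0_lt_compat; nra.
  - apply opnorm_ge; auto.
  - assert (Hw : (y, -x) <> (0,0)). { intro E; inversion E; apply Hu; f_equal; lra. }
    eapply Rle_trans; [|apply opnorm_ge; exact Hw].
    rewrite Q_inv by (auto; lra).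
    replace (dot (y,-x) (y,-x)) with (dot (x,y) (x,y)) by (unfold dot; simpl; ring).
    right; field; split; lra.
Qed.


Lemma opnorm_nonneg A : 0 <= opnorm A.
Proof.
  destruct (opnorm_lub A) as [Hub _].
  eapply Rle_trans; [|apply Hub; exists (1,0); split; [intro E; inversion E; lra|reflexivity]].
  unfold enorm. apply Rmult_le_pos; [apply sqrt_pos|].
  left; apply Rinv_0_lt_compat, sqrt_lt_R0. unfold dot; simpl; lra.
Qed.

Lemma K_bounds M x y : S2plus M -> 1 <= x*x + y*y ->
  1 <= opnorm M * opnorm (inv2 M) /\
  det2 M <= opnorm M * opnorm (inv2 M) * (Q M (x,y))^2.
Proof.
  intros HM Hn. pose proof (det_pos M HM) as Hd. destruct HM as [Hs Hp].
  assert (Hv : (x,y) <> (0,0)) by (intro E; inversion E; subst; lra).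
  assert (HJ : (-y,x) <> (0,0)) by (intro E; inversion E; apply Hv; f_equal; lra).
  pose proof (K_ge M (x,y) (-y) x (conj Hs Hp) Hv HJ) as K1.
  pose proof (K_ge M (-y,x) (-y) x (conj Hs Hp) HJ HJ) as K2.
  set (K := opnorm M * opnorm (inv2 M)) in *.
  set (p := Q M (x,y)) in *. set (q := Q M (-y,x)) in *.
  set (n := dot (x,y) (x,y)) in *.
  assert (Hn' : dot (-y,x) (-y,x) = n) by (unfold n, dot; simpl; ring).
  rewrite Hn' in K1, K2.
  assert (Hnn : n = x*x+y*y) by (unfold n, dot; simpl; ring).
  assert (Hid : p * q - (dot (x,y) (mulv M (-y,x)))^2 = det2 M * n^2).
  { unfold p, q, n, Q, dot, mulv, det2, is_sym in *; simpl. rewrite Hs. ring. }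
  assert (Hpq : det2 M * n^2 <= p*q) by (pose proof (pow2_ge_0 (dot (x,y) (mulv M (-y,x)))); lra).
  assert (Hn0 : 0 < n) by lra.
  assert (Hdn : 0 < det2 M * n) by (apply Rmult_lt_0_compat; lra).
  assert (Hp0 : 0 < p) by (apply Hp; auto).
  assert (Hq0 : 0 < q) by (apply Hp; auto).
  split.
  - eapply Rle_trans; [|exact K1].
    replace (p / n * (q / (det2 M * n))) with ((p*q) / (det2 M * n^2)) by (field; lra).
    apply Rmult_le_reg_r with (det2 M * n^2); [nra|].
    field_simplify; lra.
  - assert (Hq : det2 M * n^2 / p <= q).
    { apply Rmult_le_reg_r with p; [lra|]. field_simplify; lra. }
    assert (K3 : q * (q / (det2 M * n)) / n <= K) by (eapply Rle_trans; [|exact K2]; right; field; split; nra).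
    assert (K4 : (det2 M * n^2 / p) * (det2 M * n^2 / p) / (det2 M * n * n) <= K).
    { eapply Rle_trans; [|exact K3]. 
      assert (0 <= det2 M * n^2 / p) by (apply Rmult_le_pos; [nra| left; apply Rinv_0_lt_compat; lra]).
      replace (q * (q / (det2 M * n)) / n) with (q*q / (det2 M * n * n)) by (field; nra).
      unfold Rdiv at 3 4. apply Rmult_le_compat_r; [left; apply Rinv_0_lt_compat; nra|].
      apply Rmult_le_compat; lra. }
    replace ((det2 M * n^2 / p) * (det2 M * n^2 / p) / (det2 M * n * n)) with (det2 M * n^2 / p^2) in K4 by (field; nra).
    assert (det2 M * n^2 / p^2 * p^2 <= K * p^2) by (apply Rmult_le_compat_r; nra).
    replace (det2 M * n ^ 2 / p ^ 2 * p ^ 2) with (det2 M * n^2) in H by (field; lra).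
    nra.
Qed.


Lemma key1 (L1 L2 m T A B : R) : 0 < L1 -> L1 <= L2 -> 2 * Rabs m <= L1 -> T < 3 ->
  4 <= B*B -> T * L2 < A*A*L1 + 2*A*B*m + B*B*L2.
Proof.
  intros H1 H2 H3 H4 H5.
  assert (Hm : m*m <= L1*L1/4).
  { pose proof (Rabs_pos m). assert (Rabs m * Rabs m <= (L1/2)*(L1/2)) by nra.
    rewrite <- Rabs_mult in H0. pose proof (Rle_abs (m*m)). nra. }
  assert (Hid : L1 * (A*A*L1 + 2*A*B*m + B*B*L2) = (A*L1 + B*m)^2 + B*B*(L1*L2 - m*m)) by ring.
  apply Rmult_lt_reg_l with L1; [lra|]. rewrite Hid.
  pose proof (pow2_ge_0 (A*L1+B*m)).
  assert (L1*L2 - m*m >= 3/4 * L1 * L2) by nra.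
  assert (B*B*(L1*L2 - m*m) >= 3 * L1 * L2) by nra.
  assert (0 < L1*L2) by nra.
  assert (L1*(T*L2) < 3*L1*L2) by nra.
  lra.
Qed.

Lemma key2 (L1 L2 m T A B : R) : 0 < L1 -> 1 <= Rabs A -> B*B = 1 ->
  ((T = 1 /\ 2 * Rabs m < L1) \/ (4 * Rabs m <= L1 /\ (T-1)*L2 < L1/2)) ->
  T * L2 < A*A*L1 + 2*A*B*m + B*B*L2.
Proof.
  intros H1 HA HB Hc.
  assert (HBa : Rabs B = 1).
  { assert (Rabs B * Rabs B = 1) by (rewrite <- Rabs_mult, HB; apply Rabs_R1).
    pose proof (Rabs_pos B). nra. }
  assert (Hx : - (2 * Rabs A * Rabs m) <= 2*A*B*m).
  { assert (Rabs (2*A*B*m) = 2 * Rabs A * Rabs m).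
    { rewrite !Rabs_mult, HBa, Rabs_right by lra. ring. }
    pose proof (Rle_abs (-(2*A*B*m))). rewrite Rabs_Ropp in H0. lra. }
  assert (HAA : A*A = Rabs A * Rabs A) by (rewrite <- Rabs_mult; symmetry; apply Rabs_right; nra).
  rewrite HB, HAA. pose proof (Rabs_pos m).
  set (a := Rabs A) in *.
  assert (Ha1 : a * L1 >= L1) by nra.
  destruct Hc as [[-> Hc]|[Hc1 Hc2]].
  - assert (a * (a*L1 - 2 * Rabs m) > 0) by (apply Rmult_gt_0_compat; lra). nra.
  - assert (a * (a*L1 - 2 * Rabs m) >= L1/2) by nra. nra.
Qed.


Definition comb (a b : Z) (e f : Z*Z) : Z*Z :=
  ((a * fst e + b * fst f)%Z, (a * snd e + b * snd f)%Z).

Lemma decomp e f : (zdet e f = 1%Z \/ zdet e f = (-1)%Z) ->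
  forall x, exists a b, x = comb a b e f.
Proof.
  destruct e as [e1 e2], f as [f1 f2]; unfold zdet, comb; simpl. intros Hd [x1 x2].
  exists (zdet (e1,e2) (f1,f2) * (x1*f2 - x2*f1))%Z, (zdet (e1,e2) (f1,f2) * (e1*x2 - e2*x1))%Z.
  unfold zdet in *; simpl in *. set (d := (e1 * f2 - e2 * f1)%Z) in *.
  assert (Hdd : (d * d = 1)%Z) by (destruct Hd as [Hd|Hd]; rewrite Hd; reflexivity).
  f_equal.
  - transitivity (x1 * (d*d))%Z; [lia|]. unfold d at 2 3. ring_simplify. unfold d. ring.
  - transitivity (x2 * (d*d))%Z; [lia|]. unfold d at 2 3. unfold d. ring.
Qed.

Lemma Q_comb M a b e f : is_sym M ->
  Q M (zv (comb a b e f)) = IZR a * IZR a * Q M (zv e) + 2 * IZR a * IZR b * Mdot M e f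
     + IZR b * IZR b * Q M (zv f).
Proof.
  intros Hs. destruct e as [e1 e2], f as [f1 f2]. unfold Q, Mdot, comb, zv, dot, mulv, is_sym in *; simpl.
  rewrite !plus_IZR, !mult_IZR, Hs. ring.
Qed.

Lemma det_rel M e f : is_sym M ->
  Q M (zv e) * Q M (zv f) - Mdot M e f * Mdot M e f = det2 M * (IZR (zdet e f))^2.
Proof.
  intros Hs. destruct e as [e1 e2], f as [f1 f2]. unfold Q, Mdot, zdet, zv, dot, mulv, det2, is_sym in *; simpl.
  rewrite minus_IZR, !mult_IZR, Hs. ring.
Qed.

Lemma IZR_sq_ge4 b : (b >= 2 \/ b <= -2)%Z -> 4 <= IZR b * IZR b.
Proof. intros H. rewrite <- mult_IZR. apply IZR_le. nia. Qed.

Lemma IZR_abs_ge1 a : a <> 0%Z -> 1 <= Rabs (IZR a).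
Proof. intros H. rewrite <- abs_IZR. apply IZR_le. lia. Qed.


Lemma classify1 (L1 L2 m T : R) (H1 : 0 < L1) (H2 : L1 <= L2) (H3 : 2 * Rabs m <= L1) (H4 : T < 3)
  (Hc : (T = 1 /\ 2 * Rabs m < L1) \/ (4 * Rabs m <= L1 /\ (T-1)*L2 < L1/2)) a b : b <> 0%Z ->
  IZR a * IZR a * L1 + 2 * IZR a * IZR b * m + IZR b * IZR b * L2 <= T * L2 ->
  a = 0%Z /\ (b = 1 \/ b = -1)%Z.
Proof.
  intros Hb Hle.
  destruct (Z_le_gt_dec 2 b) as [Hb2|Hb2].
  { exfalso. pose proof (key1 L1 L2 m T (IZR a) (IZR b) H1 H2 H3 H4 (IZR_sq_ge4 b ltac:(lia))). lra. }
  destruct (Z_le_gt_dec b (-2)) as [Hb3|Hb3].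
  { exfalso. pose proof (key1 L1 L2 m T (IZR a) (IZR b) H1 H2 H3 H4 (IZR_sq_ge4 b ltac:(lia))). lra. }
  destruct (Z.eq_dec a 0) as [Ha|Ha]; [split; [auto|lia]|].
  exfalso.
  assert (HB : IZR b * IZR b = 1) by (rewrite <- mult_IZR; replace (b*b)%Z with 1%Z by nia; reflexivity).
  pose proof (key2 L1 L2 m T (IZR a) (IZR b) H1 (IZR_abs_ge1 a Ha) HB Hc). lra.
Qed.

Lemma classify2 (L1 L2 m T : R) (H1 : 0 < L1) (H4 : T < 3) a : a <> 0%Z ->
  IZR a * IZR a * L1 + 2 * IZR a * IZR 0 * m + IZR 0 * IZR 0 * L2 <= T * L1 ->
  (a = 1 \/ a = -1)%Z.
Proof.
  intros Ha Hle. simpl in Hle.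
  destruct (Z_le_gt_dec 2 a) as [Hb2|Hb2].
  { exfalso. pose proof (IZR_sq_ge4 a ltac:(lia)). nra. }
  destruct (Z_le_gt_dec a (-2)) as [Hb3|Hb3].
  { exfalso. pose proof (IZR_sq_ge4 a ltac:(lia)). nra. }
  lia.
Qed.


Lemma zdet_nz u v : (zdet u v = 1%Z \/ zdet u v = (-1)%Z) -> u <> (0%Z,0%Z) /\ v <> (0%Z,0%Z).
Proof. intros H; split; intro E; subst; unfold zdet in H; simpl in H; destruct v || destruct u; simpl in H; lia. Qed.

Lemma zv_nz x : x <> (0%Z,0%Z) -> zv x <> (0,0).
Proof.
  destruct x as [x1 x2]; intros H E; unfold zv in E; simpl in E; inversion E.
  apply eq_IZR in H1; apply eq_IZR in H2; subst; auto.
Qed.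

Lemma zv_norm x : x <> (0%Z,0%Z) -> 1 <= fst (zv x) * fst (zv x) + snd (zv x) * snd (zv x).
Proof.
  destruct x as [x1 x2]; intros H; unfold zv; simpl. rewrite <- !mult_IZR, <- plus_IZR.
  apply IZR_le. destruct (Z.eq_dec x1 0); destruct (Z.eq_dec x2 0); subst; try nia.
  exfalso; auto.
Qed.

Lemma Mnorm_Q M x y : pos_def M -> Mnorm M x <= Mnorm M y -> Q M (zv x) <= Q M (zv y).
Proof. intros Hp H. apply sqrt_le_0; try apply Q_nonneg; auto. Qed.

Lemma in_line_det u x : in_line u x -> zdet u x = 0%Z.
Proof. intros [k ->]. destruct u; unfold zdet; cbn [fst snd]; ring. Qed.

Lemma Q_scal c M v : dot v (mulv (scal2 c M) v) = c * Q M v.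
Proof. destruct v; unfold Q, dot, mulv, scal2; simpl; ring. Qed.

Theorem mainTheorem14 (M M' : mat2) (e f e' f' : Z * Z) (tau : R) :
  S2plus M -> S2plus M' ->
  reduced_basis M e f -> reduced_basis M' e' f' ->
  1 <= tau ->
  loewner_le (scal2 (/ tau ^ 2) M) M' ->
  loewner_le M' (scal2 (tau ^ 2) M) ->
  ((2 * mu_of M e f < lambda1_of M e f ^ 2 /\ tau = 1) \/
   (4 * mu_of M e f <= lambda1_of M e f ^ 2 /\
    tau ^ 4 <= 1 + / 3 * / (kappa M ^ 2))) ->
  (e' = e \/ e' = f \/ e' = zneg e \/ e' = zneg f) /\
  (f' = e \/ f' = f \/ f' = zneg e \/ f' = zneg f).
Proof.
  intros HM HM' [Hd [He Hf]] [Hd' [He' Hf']] Htau Hlo1 Hlo2 Hcase.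
  pose proof HM as [Hs Hp]. pose proof HM' as [Hs' Hp'].
  destruct (zdet_nz _ _ Hd) as [Hen Hfn].
  destruct (zdet_nz _ _ Hd') as [Hen' Hfn'].
  set (L1 := Q M (zv e)). set (L2 := Q M (zv f)). set (m := Mdot M e f).
  assert (HL1 : 0 < L1) by (apply Hp, zv_nz; auto).
  assert (HL12 : L1 <= L2) by (apply Mnorm_Q; auto).
  assert (Hcomb : forall a b, Q M (zv (comb a b e f)) = IZR a * IZR a * L1 + 2 * IZR a * IZR b * m + IZR b * IZR b * L2)
    by (intros; apply Q_comb; auto).
  assert (Hdz : zdet e f <> 0%Z) by lia.
  assert (Hnl : forall a, ~ in_line e (comb a 1 e f)).
  { intros a Hl. apply in_line_det in Hl. apply Hdz. rewrite <- Hl.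
    destruct e, f; unfold zdet, comb; cbn [fst snd]; ring. }
  assert (Hm : 2 * Rabs m <= L1).
  { assert (A1 := Mnorm_Q M f (comb 1 1 e f) Hp (Hf _ (Hnl 1%Z))).
    assert (A2 := Mnorm_Q M f (comb (-1) 1 e f) Hp (Hf _ (Hnl (-1)%Z))).
    fold L2 in A1, A2. rewrite Hcomb in A1, A2. simpl in A1, A2.
    unfold Rabs; destruct (Rcase_abs m); lra. }
  assert (Ht2 : 0 < tau^2) by nra.
  assert (Hlow : forall x, Q M (zv x) <= tau^2 * Q M' (zv x)).
  { intros x. pose proof (Hlo1 (zv x)) as H. rewrite Q_scal in H. fold (Q M' (zv x)) in H.
    apply Rmult_le_reg_l with (/ tau^2); [apply Rinv_0_lt_compat; lra|].
    rewrite <- Rmult_assoc, Rinv_l, Rmult_1_l by lra. lra. }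
  assert (Hup : forall x, Q M' (zv x) <= tau^2 * Q M (zv x)).
  { intros x. pose proof (Hlo2 (zv x)) as H. rewrite Q_scal in H. exact H. }
  set (T := tau^4).
  assert (Hcmp : forall x y, Mnorm M' x <= Mnorm M' y -> Q M (zv x) <= T * Q M (zv y)).
  { intros x y H. apply Mnorm_Q in H; auto.
    pose proof (Hlow x). pose proof (Hup y).
    unfold T; replace (tau^4) with (tau^2*tau^2) by ring. nra. }
  assert (HT : T < 3 /\ ((T = 1 /\ 2 * Rabs m < L1) \/ (4 * Rabs m <= L1 /\ (T-1)*L2 < L1/2))).
  { assert (Hlam : lambda1_of M e f ^ 2 = L1) by (unfold lambda1_of, Mnorm; apply pow2_sqrt; lra).
    unfold mu_of in Hcase. fold m in Hcase. rewrite Hlam in Hcase.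
    destruct Hcase as [[Hc1 Hc2]|[Hc1 Hc2]].
    - unfold T; rewrite Hc2. split; [lra|left; split; [ring|lra]].
    - pose proof (opnorm_nonneg M). pose proof (opnorm_nonneg (inv2 M)).
      set (K := opnorm M * opnorm (inv2 M)) in *.
      assert (HK : kappa M ^ 2 = K) by (unfold kappa; apply pow2_sqrt; unfold K; nra).
      rewrite HK in Hc2.
      destruct (K_bounds M (fst (zv e)) (snd (zv e)) HM (zv_norm e Hen)) as [K1 K2].
      rewrite <- surjective_pairing in K2. fold L1 in K2. fold K in K1, K2.
      assert (Hdr := det_rel M e f Hs). fold L1 L2 m in Hdr.
      assert (Hz : (IZR (zdet e f))^2 = 1) by (destruct Hd as [-> | ->]; cbn [fst snd]; ring).
      rewrite Hz in Hdr.
      assert (HT1 : (T - 1) * (3*K) <= 1).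
      { fold T in Hc2. assert (Hx : (T-1)*(3*K) <= (/3 * /K) * (3*K)) by (apply Rmult_le_compat_r; lra).
        replace ((/3 * /K) * (3*K)) with 1 in Hx by (field; lra). exact Hx. }
      assert (HT0 : 1 <= T) by (unfold T; replace (tau^4) with ((tau*tau)*(tau*tau)) by ring; assert (1 <= tau*tau) by nra; nra).
      split; [nra|right; split; [lra|]].
      assert (Hm2 : 16 * (m*m) <= L1*L1).
      { assert (Rabs m * Rabs m = m * m) by (rewrite <- Rabs_mult; apply Rabs_right; nra).
        pose proof (Rabs_pos m). nra. }
      assert (HLL : 0 <= L1 * L2) by nra.
      assert (H3 : 3 * K * ((T-1) * L1 * L2) <= L1 * L2).
      { assert (Hx := Rmult_le_compat_r _ _ _ HLL HT1). lra. }
      assert (H4 : L1 * L2 <= K * (L1*L1) * (17/16)).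
      { assert (K * (L1*L1) >= L1*L1) by nra. rewrite <- Rmult_1_r in Hdr. nra. }
      assert (H5 : (T-1) * L1 * L2 <= (17/48) * (L1*L1)).
      { apply Rmult_le_reg_l with (3*K); [lra|]. nra. }
      assert (H6 : (T-1)*L2 * L1 < (L1/2) * L1) by nra.
      apply Rmult_lt_reg_r with L1; lra. }
  destruct HT as [HT3 Hc].
  assert (Hcl1 := classify1 L1 L2 m T HL1 HL12 Hm HT3 Hc).
  assert (Hcl2 := classify2 L1 L2 m T HL1 HT3).
  assert (Ee : comb 1 0 e f = e) by (destruct e, f; unfold comb; cbn [fst snd]; f_equal; ring).
  assert (Ene : comb (-1) 0 e f = zneg e) by (destruct e, f; unfold comb, zneg; cbn [fst snd]; f_equal; ring).
  assert (Ef : comb 0 1 e f = f) by (destruct e, f; unfold comb; cbn [fst snd]; f_equal; ring).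
  assert (Enf : comb 0 (-1) e f = zneg f) by (destruct e, f; unfold comb, zneg; cbn [fst snd]; f_equal; ring).
  assert (He'b : Q M (zv e') <= T * L1) by (apply Hcmp, He'; auto).
  assert (HE' : e' = e \/ e' = zneg e \/ e' = f \/ e' = zneg f).
  { destruct (decomp e f Hd e') as [a [b ->]].
    rewrite Hcomb in He'b.
    destruct (Z.eq_dec b 0) as [->|Hb].
    - destruct (Z.eq_dec a 0) as [->|Ha].
      + exfalso; apply Hen'; destruct e, f; unfold comb; cbn [fst snd]; f_equal; ring.
      + destruct (Hcl2 a Ha He'b) as [->| ->]; auto.
    - assert (He'b2 : IZR a * IZR a * L1 + 2 * IZR a * IZR b * m + IZR b * IZR b * L2 <= T * L2).
      { assert (0 <= T) by (unfold T; nra). nra. }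
      destruct (Hcl1 a b Hb He'b2) as [-> [-> | ->]]; auto. }
  split; [tauto|].
  destruct (decomp e f Hd f') as [c [d ->]].
  assert (Hdz' : zdet e' (comb c d e f) <> 0%Z) by lia.
  destruct HE' as [HE|[HE|[HE|HE]]]; subst e'.
  -
    assert (Hb := Hcmp _ _ (Hf' f ltac:(intro Hl; apply in_line_det in Hl; lia))).
    fold L2 in Hb. rewrite Hcomb in Hb.
    destruct (Z.eq_dec d 0) as [->|Hd0].
    + exfalso; apply Hdz'. destruct e, f; unfold zdet, comb; cbn [fst snd]; ring.
    + destruct (Hcl1 c d Hd0 Hb) as [-> [-> | ->]]; auto.
  - assert (Hb := Hcmp _ _ (Hf' f ltac:(intro Hl; apply in_line_det in Hl;
      destruct e, f; unfold zdet, zneg in *; simpl in *; lia))).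
    fold L2 in Hb. rewrite Hcomb in Hb.
    destruct (Z.eq_dec d 0) as [->|Hd0].
    + exfalso; apply Hdz'. destruct e, f; unfold zdet, comb, zneg; cbn [fst snd]; ring.
    + destruct (Hcl1 c d Hd0 Hb) as [-> [-> | ->]]; auto.
  - assert (Hb := Hcmp _ _ (Hf' e ltac:(intro Hl; apply in_line_det in Hl;
      destruct e, f; unfold zdet in *; simpl in *; lia))).
    fold L1 in Hb. rewrite Hcomb in Hb.
    destruct (Z.eq_dec d 0) as [->|Hd0].
    + destruct (Z.eq_dec c 0) as [->|Hc0].
      * exfalso; apply Hdz'. destruct e, f; unfold zdet, comb; cbn [fst snd]; ring.
      * destruct (Hcl2 c Hc0 Hb) as [->| ->]; auto.
    + exfalso.
      assert (Hb2 : IZR c * IZR c * L1 + 2 * IZR c * IZR d * m + IZR d * IZR d * L2 <= T * L2).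
      { assert (0 <= T) by (unfold T; nra). nra. }
      destruct (Hcl1 c d Hd0 Hb2) as [-> [-> | ->]]; apply Hdz';
        destruct e, f; unfold zdet, comb; cbn [fst snd]; ring.
  - assert (Hb := Hcmp _ _ (Hf' e ltac:(intro Hl; apply in_line_det in Hl;
      destruct e, f; unfold zdet, zneg in *; simpl in *; lia))).
    fold L1 in Hb. rewrite Hcomb in Hb.
    destruct (Z.eq_dec d 0) as [->|Hd0].
    + destruct (Z.eq_dec c 0) as [->|Hc0].
      * exfalso; apply Hdz'. destruct e, f; unfold zdet, comb, zneg; cbn [fst snd]; ring.
      * destruct (Hcl2 c Hc0 Hb) as [->| ->]; auto.
    + exfalso.
      assert (Hb2 : IZR c * IZR c * L1 + 2 * IZR c * IZR d * m + IZR d * IZR d * L2 <= T * L2).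
      { assert (0 <= T) by (unfold T; nra). nra. }
      destruct (Hcl1 c d Hd0 Hb2) as [-> [-> | ->]]; apply Hdz';
        destruct e, f; unfold zdet, comb, zneg; cbn [fst snd]; ring.
Qed.
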